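(* Let $C$ be a Greene–Kleitman chain of length $h$ in $Q_n$ and let $C'$ be a child of $C$ obtained by matching the two consecutive $*$s of $C$ at positions $a$ and $b$. Then there are exactly $h-2$ flipping $4$-cycles between $C$ and $C'$; they use pairwise distinct edges of $C$ and pairwise distinct edges of $C'$, and the edges of $C$ they use are all edges of $C$ except the two consecutive edges of $C$ that flip the coordinates $a$ and $b$.
   Context: $Q_n$ is the hypercube on $\{0,1\}^n$. Let $D$ be the set of bitstrings (including the empty string) with equally many $0$s and $1$s such that every prefix has at least as many $0$s as $1$s. A (Greene–Kleitman) chain of length $h$ is encoded as a string of length $n$ over $\{0,1,*\}$ of the form $u_0*u_1*\cdots*u_{h-1}*u_h$ with all $u_j\in D$; it is the path in $Q_n$ whose vertices are obtained by replacing the $*$s by $i$ ones followed by $h-i$ zeros, $i=0,1,\ldots,h$ (consecutive vertices differ in one $*$-position). A chain $C'$ of length $h-2$ is a child of a chain $C$ of length $h$ if $C'$ is obtained from $C$ by replacing two consecutive $*$s (i.e., two $*$s with no $*$ between them) by $0$ and $1$, respectively (''matching two $*$s''). A flipping $4$-cycle between two vertex-disjoint paths $P,P'$ is a $4$-cycle in $Q_n$ that shares exactly one edge with each of the two paths. *)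

(* Defs.v *)
From mathcomp Require Import all_boot.
Set Implicit Arguments. Unset Strict Implicit. Unset Printing Implicit Defensive.

(* Symbols over {0,1,*}: Some false = 0, Some true = 1, None = *.
   Bits: false = 0, true = 1. *)

Definition dyck (s : seq bool) : bool :=
  (count id s == count negb s) &&
  all (fun k => count id (take k s) <= count negb (take k s)) (iota 0 (size s).+1).

Definition gk_word (us : seq (seq bool)) : seq (option bool) :=
  match us with
  | [::] => [::]
  | u :: rest => map Some u ++ flatten [seq None :: map Some u' | u' <- rest]
  end.

Definition gk_chain (n h : nat) (w : seq (option bool)) : Prop :=
  size w = n /\
  exists us : seq (seq bool), [/\ size us = h.+1, all dyck us & w = gk_word us].

Definition vtx (n : nat) := {ffun 'I_n -> bool}.

Definition adj n (u v : vtx n) : bool := #|[set j | u j != v j]| == 1.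

Definition nstars (w : seq (option bool)) : nat := count (pred1 None) w.

(* i-th vertex of the chain: the first i stars become 1, the remaining 0 *)
Definition vert n (w : seq (option bool)) (i : nat) : vtx n :=
  [ffun j : 'I_n => match nth None w j with
                    | Some b => b
                    | None => count (pred1 None) (take j w) < i
                    end].

Definition chain_edges n (w : seq (option bool)) : {set {set vtx n}} :=
  [set [set vert n w i; vert n w i.+1] | i : 'I_(nstars w)].

Definition flip_edges n (w : seq (option bool)) (a : 'I_n) : {set {set vtx n}} :=
  [set e in chain_edges n w | [exists u in e, exists v in e, u a != v a]].

Definition child_at (w w' : seq (option bool)) (a b : nat) : Prop :=
  [/\ a < b < size w, nth (Some false) w a = None, nth (Some false) w b = None,
      (forall k, a < k < b -> nth (Some false) w k != None) &
      w' = set_nth None (set_nth None w a (Some false)) b (Some true)].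

Definition is_cycle4 n (E : {set {set vtx n}}) : bool :=
  [exists v0 : vtx n, exists v1 : vtx n, exists v2 : vtx n, exists v3 : vtx n,
    [&& uniq [:: v0; v1; v2; v3], adj v0 v1, adj v1 v2, adj v2 v3, adj v3 v0 &
        E == [set [set v0; v1]; [set v1; v2]; [set v2; v3]; [set v3; v0]]]].

Definition flipping_cycles n (P P' : {set {set vtx n}}) : {set {set {set vtx n}}} :=
  [set E | [&& is_cycle4 E, #|E :&: P| == 1 & #|E :&: P'| == 1]].

(* Main.v *)
Require Import Defs.
From mathcomp Require Import all_boot.
Set Implicit Arguments. Unset Strict Implicit. Unset Printing Implicit Defensive.

Ltac set4 := apply/eqP; rewrite eqEsubset; apply/andP; split; apply/subsetP => x;
  rewrite !inE -!orbA => /or4P [] /eqP ->; rewrite ?eqxx /= ?orbT //; rewrite setUC ?eqxx /= ?orbT //.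

Section Cube.
Variable n : nat.
Local Notation V := (vtx n).
Definition flip (u : V) (c : 'I_n) : V := [ffun j => if j == c then ~~ u j else u j].

Lemma flipE u c j : flip u c j = if j == c then ~~ u j else u j.
Proof. by rewrite ffunE. Qed.

Lemma flipK u c : flip (flip u c) c = u.
Proof. apply/ffunP=> j; rewrite !flipE; case: eqP => //; by rewrite negbK. Qed.

Lemma flipC u c d : flip (flip u c) d = flip (flip u d) c.
Proof. apply/ffunP=> j; rewrite !flipE; by case: (j == c); case: (j == d). Qed.

Lemma flip_neq u c : flip u c != u.
Proof. apply/eqP=> /ffunP /(_ c); rewrite flipE eqxx; by case: (u c). Qed.

Lemma flip_injc u c d : flip u c = flip u d -> c = d.
Proof.
move=> /ffunP /(_ c); rewrite !flipE eqxx; case: (c =P d) => // _; by case: (u c).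
Qed.

Lemma flip_inj c : injective (flip ^~ c).
Proof. exact: (@can_inj _ _ (flip ^~ c) (flip ^~ c) (fun u => flipK u c)). Qed.

Lemma flip2_neq p d c : c != d -> flip (flip p d) c != p.
Proof.
move=> cd; apply/eqP=> /ffunP /(_ c); rewrite !flipE eqxx (negbTE cd); by case: (p c).
Qed.

Lemma flip_par p d c c' : flip (flip p d) c != flip p c'.
Proof.
case: (c =P d) => [->|/eqP cd]; first by rewrite flipK eq_sym flip_neq.
apply/eqP=> /ffunP H.
case: (c' =P d) => [e|/eqP c'd].
  move: (H c); rewrite !flipE eqxx (negbTE cd) e (negbTE cd); by case: (p c).
move: (H d); rewrite !flipE eqxx eq_sym (negbTE cd) eq_sym (negbTE c'd); by case: (p d).
Qed.

Lemma adj_flip u c : adj u (flip u c).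
Proof.
apply/cards1P; exists c; apply/setP=> j; rewrite !inE flipE.
case: (j =P c) => [->|_]; by case: (u _).
Qed.

Lemma adjP u v : adj u v -> exists c, v = flip u c.
Proof.
move=> /cards1P [c Hc]; exists c; apply/ffunP=> j; rewrite flipE.
have := congr1 (fun S : {set 'I_n} => j \in S) Hc; rewrite /= !inE.
case: (j =P c) => [->|_]; case: (u _); case: (v _) => //.
Qed.

Lemma set2_flip_unique u t v s : [set u; flip u t] = [set v; flip v s] -> t = s.
Proof.
move=> H.
have Hu : u \in [set v; flip v s] by rewrite -H !inE eqxx.
have Hf : flip u t \in [set v; flip v s] by rewrite -H !inE eqxx orbT.
move: Hu Hf; rewrite !inE => /orP [] /eqP -> /orP [] /eqP.
- by move=> E; move: (flip_neq v t); rewrite E eqxx.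
- by move/flip_injc.
- case: (t =P s) => // /eqP ts E; move: (flip2_neq v ts); by rewrite E eqxx.
- by move=> E; move: (flip_neq (flip v s) t); rewrite E eqxx.
Qed.


Lemma flipCK u x y : flip (flip (flip u x) y) x = flip u y.
Proof. by rewrite flipC flipK. Qed.

Definition cyc (p : V) d c : {set {set V}} :=
  [set [set p; flip p d]; [set flip p d; flip (flip p d) c];
       [set flip (flip p d) c; flip p c]; [set flip p c; p]].

Lemma cyc_cycle4 p d c : c != d -> is_cycle4 (cyc p d c).
Proof.
move=> cd.
apply/existsP; exists p; apply/existsP; exists (flip p d);
apply/existsP; exists (flip (flip p d) c); apply/existsP; exists (flip p c).
rewrite eqxx andbT !adj_flip /=.
have A3 : adj (flip (flip p d) c) (flip p c).
  by rewrite -(flipCK p d c) adj_flip.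
have A4 : adj (flip p c) p by rewrite -{2}(flipK p c) adj_flip.
rewrite A3 A4 !andbT !inE !negb_or.
have h1 := flip_neq p d. have h2 := flip2_neq p cd. have h3 := flip_neq p c.
have h4 := flip_neq (flip p d) c.
have h5 : flip p c != flip p d by apply/eqP => /flip_injc /eqP; rewrite (negbTE cd).
have h6 := flip_par p d c c.
by rewrite !(eq_sym p) h1 h2 h3 (eq_sym (flip p d)) h4 (eq_sym (flip p d)) h5 h6.
Qed.

Lemma cycle_struct E e e' : is_cycle4 E -> e \in E -> e' \in E ->
  (forall x, x \in e -> x \in e' -> False) ->
  exists p d c, [/\ c != d, E = cyc p d c, e' = [set p; flip p d] &
                    e = [set flip p c; flip (flip p d) c]].
Proof.
rewrite /is_cycle4 => /existsP [v0 /existsP [v1 /existsP [v2 /existsP [v3]]]].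
case/andP => Hu /and5P [/adjP [d E1] /adjP [c E2] /adjP [d2 E4] /adjP [d3 E3] /eqP ->].
subst v1 v2 v3.
have E3' : flip v0 d3 = flip (flip (flip v0 d) c) d2 by rewrite {1}E3 flipK.
move: Hu; rewrite /= !inE !negb_or => /and4P [/and3P [n01 n02 n03] /andP [n12 n13] n23 _].
have cd : c != d.
  apply/eqP => ecd; move: n02; by rewrite ecd flipK eqxx.
have ed2 : d2 = d.
  apply/eqP; apply/negP => /negP dd2.
  have : d == d3.
    move/ffunP: E3' => /(_ d); rewrite !flipE eqxx (eq_sym d d2) (negbTE dd2) (eq_sym d c) (negbTE cd).
    by case: (d == d3); case: (v0 d).
  move/eqP => ed3; move: E3; rewrite -ed3 => E3.
  by move: n13; rewrite -E3' -ed3 eqxx.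
subst d2; rewrite flipCK.
move=> He He' Hd.
move: He He'; rewrite -!orbA => /or4P [] /eqP He /or4P [] /eqP He'; subst e e';
  try solve [ exfalso; first [ by apply: (Hd v0); rewrite !inE eqxx ?orbT
                             | by apply: (Hd (flip v0 d)); rewrite !inE eqxx ?orbT
                             | by apply: (Hd (flip v0 c)); rewrite !inE eqxx ?orbT
                             | by apply: (Hd (flip (flip v0 d) c)); rewrite !inE eqxx ?orbT ] ].
- exists (flip v0 c), d, c; split => //.
  + rewrite /cyc flipK flipCK (flipC v0 c d).
set4.
  + by rewrite (flipC v0 c d) setUC.
  + by rewrite flipK flipCK.
- exists v0, c, d; split => //; first (by rewrite eq_sym).
  + rewrite /cyc (flipC v0 c d); set4.
  + by rewrite setUC.
  + by rewrite (flipC v0 c d).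
- exists v0, d, c; split => //; by rewrite setUC.
- exists (flip v0 d), c, d; split => //; first (by rewrite eq_sym).
  + rewrite /cyc flipK flipCK; set4.
  + by rewrite flipK flipCK setUC.
Qed.



Lemma cyc_sym p d c : cyc (flip p d) d c = cyc p d c.
Proof. rewrite /cyc flipK; set4. Qed.

Lemma cyc_det0 p d c1 c2 :
  [set flip p c1; flip (flip p d) c1] = [set flip p c2; flip (flip p d) c2] -> c1 = c2.
Proof.
move=> H.
have : flip p c1 \in [set flip p c2; flip (flip p d) c2] by rewrite -H !inE eqxx.
rewrite !inE => /orP [/eqP /flip_injc //|/eqP E].
by move: (flip_par p d c2 c1); rewrite E eqxx.
Qed.

Lemma cyc_det p1 d1 c1 p2 d2 c2 :
  [set p1; flip p1 d1] = [set p2; flip p2 d2] ->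
  [set flip p1 c1; flip (flip p1 d1) c1] = [set flip p2 c2; flip (flip p2 d2) c2] ->
  cyc p1 d1 c1 = cyc p2 d2 c2.
Proof.
move=> H1 H2; have ed := set2_flip_unique H1; subst d2.
have : p2 \in [set p1; flip p1 d1] by rewrite H1 !inE eqxx.
rewrite !inE => /orP [/eqP e|/eqP e]; subst p2.
  by rewrite (cyc_det0 H2).
rewrite cyc_sym; move: H2; rewrite flipK [X in _ = X]setUC => H2.
by rewrite (cyc_det0 H2).
Qed.

Lemma flip_edges_char (u : V) t (a : 'I_n) :
  [exists x in [set u; flip u t], exists y in [set u; flip u t], x a != y a] = (t == a).
Proof.
apply/existsP/eqP.
  case=> x /andP [] /[!inE] Hx /existsP [y /andP [] /[!inE] Hy].
  case: (t =P a) => // /eqP ta.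
  by move: Hx Hy => /orP [] /eqP -> /orP [] /eqP ->; rewrite ?flipE ?(eq_sym a) ?(negbTE ta) ?eqxx.
move=> <-; exists u; rewrite !inE eqxx /=; apply/existsP; exists (flip u t).
by rewrite !inE eqxx orbT /= flipE eqxx; case: (u t).
Qed.

Lemma setI_single (T : finType) (S P : {set T}) z :
  z \in S -> z \in P -> (forall x, x \in S -> x \in P -> x = z) -> S :&: P = [set z].
Proof.
move=> zS zP H; apply/setP => x; rewrite !inE.
apply/andP/eqP => [[xS xP]|->]; [exact: H | by split].
Qed.

End Cube.

Definition rk (w : seq (option bool)) j := count (pred1 None) (take j w).

Lemma star_exists (w : seq (option bool)) i : i < count (pred1 None) w ->
  exists j, [/\ j < size w, nth None w j = None & rk w j = i].
Proof.
elim: w i => [|x w IH] i //=.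
case: x => [b|] /=.
  move=> /IH [j [H1 H2 H3]]; exists j.+1; split => //.
case: i => [_|i]; first by exists 0.
move=> /IH [j [H1 H2 H3]]; exists j.+1; split => //.
by rewrite /rk /= -/(rk w j) H3.
Qed.

Lemma nstars_gk us : nstars (gk_word us) = (size us).-1.
Proof.
case: us => [|u rest] //=; rewrite /nstars count_cat.
have -> : count (pred1 None) (map Some u) = 0 by elim: u => //= x u ->.
rewrite add0n; elim: rest => //= u' r IH; rewrite count_cat IH /=.
have -> : count (pred1 None) (map Some u') = 0 by elim: u' => //= x u ->.
by [].
Qed.

Section Chain.
Variable n : nat.
Variable w : seq (option bool).
Hypothesis Hw : size w = n.
Local Notation V := (vtx n).
Local Notation x i := (vert n w i).

Lemma rkS j : j < size w -> rk w j.+1 = rk w j + (nth None w j == None).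
Proof. by move=> Hj; rewrite /rk (take_nth None Hj) -cats1 count_cat /= addn0. Qed.

Lemma rk_le j k : j <= k -> rk w j <= rk w k.
Proof.
elim: k => [|k IH]; first by rewrite leqn0 => /eqP ->.
rewrite leq_eqVlt => /orP [/eqP ->//|]; rewrite ltnS => /IH H.
apply: (leq_trans H); case: (ltnP k (size w)) => Hk.
  by rewrite rkS // leq_addr.
by rewrite /rk !take_oversize // (leq_trans Hk).
Qed.

Lemma rk_lt j k : j < k -> j < size w -> nth None w j = None -> rk w j < rk w k.
Proof.
move=> jk Hj Hn; apply: (leq_trans _ (rk_le jk)).
by rewrite rkS // Hn eqxx addn1.
Qed.

Lemma rk_inj j k : j < size w -> k < size w -> nth None w j = None -> nth None w k = None ->
  rk w j = rk w k -> j = k.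
Proof.
move=> Hj Hk Nj Nk E; case: (ltngtP j k) => // jk.
  by move: (rk_lt jk Hj Nj); rewrite E ltnn.
by move: (rk_lt jk Hk Nk); rewrite E ltnn.
Qed.

Lemma vertS i (j : 'I_n) : nth None w j = None -> rk w j = i -> x i.+1 = flip (x i) j.
Proof.
move=> Nj Rj; apply/ffunP => m; rewrite flipE !ffunE.
case: (m =P j) => [->|/eqP ne]; first by rewrite Nj -/(rk w j) Rj ltnSn ltnn.
case Nm: (nth None w m) => [b|] //.
have : rk w m != i.
  apply/eqP => E; move/eqP: ne; apply.
  apply/val_inj/(rk_inj _ _ Nm Nj); rewrite ?Hw ?ltn_ord //.
  by rewrite E Rj.
rewrite -/(rk w m) ltnS leq_eqVlt => /negbTE ->.
by [].
Qed.

Lemma chain_edgeP e : e \in chain_edges n w ->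
  exists i (j : 'I_n), [/\ i < nstars w, nth None w j = None, rk w j = i &
                          e = [set x i; flip (x i) j]].
Proof.
case/imsetP => i _ ->.
have [j [H1 H2 H3]] := star_exists (ltn_ord i).
have Hj : j < n by rewrite -Hw.
exists i, (Ordinal Hj); split => //.
by rewrite (@vertS i (Ordinal Hj) H2 H3).
Qed.

Lemma chain_edge_in i (j : 'I_n) : i < nstars w -> nth None w j = None -> rk w j = i ->
  [set x i; flip (x i) j] \in chain_edges n w.
Proof.
move=> Hi Nj Rj; apply/imsetP; exists (Ordinal Hi) => //=.
by rewrite (vertS Nj Rj).
Qed.

Lemma chain_edge_vert e u : e \in chain_edges n w -> u \in e -> exists i, u = x i.
Proof.
case/imsetP => i _ -> /[!inE] /orP [] /eqP ->; by eexists.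
Qed.

Lemma chain_edge_star e u t : e \in chain_edges n w -> e = [set u; flip u t] ->
  nth None w t = None.
Proof.
case/chain_edgeP => i [j [_ Nj _ ->]] /set2_flip_unique <-; exact Nj.
Qed.

Lemma chain_edge_uniq e1 e2 u1 u2 t : e1 \in chain_edges n w -> e2 \in chain_edges n w ->
  e1 = [set u1; flip u1 t] -> e2 = [set u2; flip u2 t] -> e1 = e2.
Proof.
case/chain_edgeP => i1 [j1 [_ N1 R1 ->]]; case/chain_edgeP => i2 [j2 [_ N2 R2 ->]].
move=> /set2_flip_unique E1 /set2_flip_unique E2; subst j1 j2.
by rewrite -R1 -R2.
Qed.

Lemma card_chain : #|chain_edges n w| = nstars w.
Proof.
rewrite card_imset ?card_ord //.
move=> i1 i2 H.
have [j1 [H1 N1 R1]] := star_exists (ltn_ord i1).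
have [j2 [H2 N2 R2]] := star_exists (ltn_ord i2).
have Hj1 : j1 < n by rewrite -Hw.
have Hj2 : j2 < n by rewrite -Hw.
move: H; rewrite (@vertS _ (Ordinal Hj1)) // (@vertS _ (Ordinal Hj2)) //.
move/set2_flip_unique => [] E; subst j2.
by apply/val_inj; rewrite /= -R1 -R2.
Qed.

End Chain.

From mathcomp Require Import zify.

Lemma arith1 (i k : nat) : k <= i -> i != k -> i != k.+1 -> exists m, i = m.+2 /\ k <= m.
Proof. move=> H1 H2 H3; exists i.-2; lia. Qed.

Lemma arith2 (i k N N' : nat) : N' + 2 = N -> i < k -> k.+2 <= N -> i < N'.
Proof. lia. Qed.
Lemma arith3 (m N N' : nat) : N' + 2 = N -> m.+2 < N -> m < N'.
Proof. lia. Qed.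

Section Main.
Variables (n : nat) (w w' : seq (option bool)) (a b : 'I_n).
Hypothesis Hw : size w = n.
Hypothesis Hab : a < b.
Hypothesis Na : nth None w a = None.
Hypothesis Nb : nth None w b = None.
Hypothesis Hbet : forall j, a < j < b -> nth None w j != None.
Hypothesis Hw' : w' = set_nth None (set_nth None w a (Some false)) b (Some true).
Local Notation V := (vtx n).
Local Notation x i := (vert n w i).
Local Notation y i := (vert n w' i).
Local Notation k := (rk w a).

Lemma size_w' : size w' = n.
Proof.
rewrite Hw' !size_set_nth Hw (maxn_idPr _) ?ltn_ord // (maxn_idPr _) ?ltn_ord //.
Qed.

Lemma nth_w' j : nth None w' j = if j == b then Some true else if j == (a : nat) then Some false else nth None w j.
Proof. by rewrite Hw' nth_set_nth /= nth_set_nth. Qed.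

Lemma rkb : rk w b = k.+1.
Proof.
have H : forall d, a + d.+1 <= b -> rk w (a + d.+1) = k.+1.
  elim => [|d IH] H.
    by rewrite addn1 rkS ?Hw ?ltn_ord // Na eqxx addn1.
  rewrite addnS rkS; last by rewrite Hw; have := ltn_ord b; lia.
  rewrite IH; last by lia.
  have : a < a + d.+1 < b by apply/andP; split; lia.
  by move/Hbet/negbTE ->; rewrite addn0.
have -> : (b : nat) = a + (b - a - 1).+1 by lia.
apply: H; lia.
Qed.

Lemma rk' j : j <= n -> rk w' j + (a < j) + (b < j) = rk w j.
Proof.
elim: j => [|j IH] Hj; first by rewrite /rk !take0.
have Hjn : j < n by [].
have H1 := @rkS w' j; rewrite size_w' in H1.
have H2 := @rkS w j; rewrite Hw in H2.
rewrite (H1 Hjn) (H2 Hjn) -(IH (ltnW Hj)) nth_w'.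
move: (rk w' j) => r.
case: (j =P b) => [->|jb].
  rewrite Nb eqxx ltnSn ltnn Hab ltnS ltnW //=.
  by rewrite !addn0.
case: (j =P a) => [->|ja].
  rewrite Na eqxx ltnSn ltnn //= ltnS leqNgt Hab /=.
  have -> : (b < a) = false by apply/negbTE; rewrite -leqNgt ltnW.
  by rewrite !addn0.
have -> : (a < j.+1) = (a < j) by rewrite ltnS leq_eqVlt; case: eqP => // /esym.
have -> : (b < j.+1) = (b < j) by rewrite ltnS leq_eqVlt; case: eqP => // /esym.
move: (nth None w j == None) (a < j) (b < j) => [] [] []; by rewrite ?addn0.
Qed.


Lemma vertE (v : seq (option bool)) i (j : 'I_n) :
  vert n v i j = match nth None v j with Some c => c | None => rk v j < i end.
Proof. by rewrite ffunE. Qed.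

Lemma nab : (a == b :> nat) = false.
Proof. by apply/negbTE; rewrite neq_ltn Hab. Qed.

Lemma nth_w'o (j : 'I_n) : nth None w' j = if j == b then Some true else if j == a then Some false else nth None w j.
Proof. by rewrite nth_w'. Qed.

Lemma nabo : (a == b) = false.
Proof. exact: nab. Qed.

Lemma nstars' : nstars w' + 2 = nstars w.
Proof.
have := rk' (leqnn n).
rewrite /rk !take_oversize ?Hw ?size_w' // !ltn_ord.
by rewrite /nstars => <-; rewrite -addnA.
Qed.

Lemma star_side (j : nat) : j < n -> nth None w j = None -> j != a -> j != b -> (j < a) || (b < j).
Proof.
move=> jn Nj ja jb; case: (ltngtP j a) => [//|aj|e]; last by move: ja; rewrite e eqxx.
case: (ltngtP b j) => [//|bj|e].
  by move: (Hbet (j := j)); rewrite aj bj Nj => /(_ isT).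
by move: jb; rewrite e eqxx.
Qed.

Lemma rk_small (j : nat) : j < a -> nth None w j = None -> rk w j < k.
Proof. move=> ja Nj; apply: rk_lt => //; rewrite Hw; exact: (ltn_trans ja). Qed.

Lemma rk_big (j : nat) : b < j -> k.+2 <= rk w j.
Proof. move=> bj; rewrite -rkb; apply: rk_lt => //; by rewrite Hw. Qed.

Lemma VR1 i : i <= k -> y i = flip (x i) b.
Proof.
move=> ik; apply/ffunP => j; rewrite flipE !vertE nth_w'o.
case: (j =P b) => [->|/eqP jb]; first by rewrite Nb rkb -leqNgt (leq_trans ik).

case: (j =P a) => [->|/eqP ja]; first by rewrite Na ltnNge ik.
case Nj: (nth None w j) => [c|] //.
have := rk' (ltnW (ltn_ord j)).
have := star_side (ltn_ord j) Nj ja jb.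
case/orP => [ja'|bj].
  rewrite (ltnNge a j) (ltnW ja') (ltnNge b j) (ltnW (ltn_trans ja' Hab)) /= !addn0 => ->.
  done.
have H1 := rk_big bj.
rewrite bj (ltn_trans Hab bj) /= => E.
move: E H1 ik; move: (rk w' j) (rk w j) k i => r1 r2 r3 r4. lia.
Qed.

Lemma VR2 i : k <= i -> y i = flip (x i.+2) a.
Proof.
move=> ik; apply/ffunP => j; rewrite flipE !vertE nth_w'o.
case: (j =P b) => [->|/eqP jb]; first by rewrite eq_sym nabo Nb rkb !ltnS ik.

case: (j =P a) => [->|/eqP ja]; first by rewrite Na ltnS leqW.

case Nj: (nth None w j) => [c|] //.
have := rk' (ltnW (ltn_ord j)).
have := star_side (ltn_ord j) Nj ja jb.
case/orP => [ja'|bj].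
  have H1 := rk_small ja' Nj.
  rewrite (ltnNge a j) (ltnW ja') (ltnNge b j) (ltnW (ltn_trans ja' Hab)) /= !addn0 => E.
  move: E H1 ik; move: (rk w' j) (rk w j) k i => r1 r2 r3 r4. lia.
have H1 := rk_big bj.
rewrite bj (ltn_trans Hab bj) /= => E.
move: E H1 ik; move: (rk w' j) (rk w j) k i => r1 r2 r3 r4. lia.
Qed.

Lemma xy_neq i m : x i != y m.
Proof.
apply/eqP => /ffunP H; move: (H a) (H b); rewrite !vertE !nth_w'o Na Nb nabo eqxx rkb.
rewrite eqxx /= => H1 H2; move: H1; by rewrite (ltn_trans (ltnSn _) H2).
Qed.


Local Notation P := (chain_edges n w).
Local Notation P' := (chain_edges n w').
Local Notation F := (flipping_cycles P P').
Local Notation D := (P :\: (flip_edges w a :|: flip_edges w b)).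

Lemma nst_big : k.+2 <= nstars w.
Proof.
have bn : b < size w by rewrite Hw.
have := @rk_lt w b n (ltn_ord b) bn Nb.
have -> : rk w n = nstars w by rewrite /rk take_oversize ?Hw.
by rewrite rkb.
Qed.

Lemma xy_disj e e' u : e \in P -> e' \in P' -> u \in e -> u \in e' -> False.
Proof.
move=> eP eP' ue ue'.
have [i Ei] := chain_edge_vert eP ue.
have [m Em] := chain_edge_vert eP' ue'.
by move: (xy_neq i m); rewrite -Ei -Em eqxx.
Qed.

Lemma F_struct E : E \in F -> exists p d c,
  [/\ E = cyc p d c, E :&: P = [set [set flip p c; flip (flip p c) d]],
      E :&: P' = [set [set p; flip p d]],
      [set flip p c; flip (flip p c) d] \in P & [set p; flip p d] \in P'].
Proof.
rewrite inE => /and3P [Hc /cards1P [e He] /cards1P [e' He']].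
have : e \in E :&: P by rewrite He set11.
have : e' \in E :&: P' by rewrite He' set11.
rewrite !inE => /andP [e'E e'P] /andP [eE eP].
have [p [d [c [cd HE E1 E2]]]] := cycle_struct Hc eE e'E (fun u h1 h2 => xy_disj eP e'P h1 h2).
exists p, d, c; rewrite (flipC p c d) -E1 -E2; by split.
Qed.

Lemma F_inj E1 E2 : E1 \in F -> E2 \in F ->
  (E1 :&: P = E2 :&: P) \/ (E1 :&: P' = E2 :&: P') -> E1 = E2.
Proof.
move=> /F_struct [p1 [d1 [c1 [-> h1 h1' i1 i1']]]] /F_struct [p2 [d2 [c2 [-> h2 h2' i2 i2']]]].
rewrite h1 h2 h1' h2' => H.
suff [H1 H2] : [set p1; flip p1 d1] = [set p2; flip p2 d2] /\
   [set flip p1 c1; flip (flip p1 c1) d1] = [set flip p2 c2; flip (flip p2 c2) d2].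
  by apply: cyc_det; [exact: H1 | rewrite -(flipC p1 c1 d1) -(flipC p2 c2 d2); exact: H2].
case: H => /set1_inj H.
  have ed := set2_flip_unique H; subst d2; split; last exact: H.
  exact: (chain_edge_uniq size_w' i1' i2' erefl erefl).
have ed := set2_flip_unique H; subst d2; split; first exact: H.
exact: (chain_edge_uniq Hw i1 i2 erefl erefl).
Qed.

Lemma F_single E : E \in F -> exists e, E :&: P = [set e].
Proof. by rewrite inE => /and3P [_ /cards1P ? _]. Qed.

Lemma F_single' E : E \in F -> exists e, E :&: P' = [set e].
Proof. by rewrite inE => /and3P [_ _ /cards1P ?]. Qed.

Lemma F_notflip E e : E \in F -> E :&: P = [set e] -> e \in D.
Proof.
move=> /F_struct [p [d [c [_ h1 _ i1 i1']]]]; rewrite h1 => /set1_inj <-.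
have := chain_edge_star size_w' i1' erefl; rewrite nth_w'o.
case: (d =P b) => [//|db]; case: (d =P a) => [//|da] _.
rewrite !inE i1 /= !flip_edges_char.
have /negbTE -> : d != a by apply/eqP.
by have /negbTE -> : d != b by apply/eqP.
Qed.


Lemma yP m (z : {set V}) : y m \in z -> z \in P -> False.
Proof.
move=> yz zP; have [i Ei] := chain_edge_vert zP yz.
by move: (xy_neq i m); rewrite -Ei eqxx.
Qed.

Lemma xP' i (z : {set V}) : x i \in z -> z \in P' -> False.
Proof.
move=> xz zP; have [m Em] := chain_edge_vert zP xz.
by move: (xy_neq i m); rewrite -Em eqxx.
Qed.

Definition sq i1 i2 m1 m2 : {set {set V}} :=
  [set [set x i1; x i2]; [set x i2; y m2]; [set y m2; y m1]; [set y m1; x i1]].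

Lemma square_F i1 i2 m1 m2 :
  [set x i1; x i2] \in P -> [set y m2; y m1] \in P' ->
  sq i1 i2 m1 m2 :&: P = [set [set x i1; x i2]] /\ sq i1 i2 m1 m2 :&: P' = [set [set y m2; y m1]].
Proof.
move=> HP HP'; split; apply: setI_single; rewrite ?inE ?eqxx ?orbT ?HP ?HP' //.
- move=> z; rewrite !inE -!orbA => /or4P [] /eqP -> zP.
  + by [].
  + by case: (yP (m := m2) _ zP); rewrite !inE eqxx ?orbT.
  + by case: (yP (m := m2) _ zP); rewrite !inE eqxx ?orbT.
  + by case: (yP (m := m1) _ zP); rewrite !inE eqxx ?orbT.
- move=> z; rewrite !inE -!orbA => /or4P [] /eqP -> zP.
  + by case: (xP' (i := i1) _ zP); rewrite !inE eqxx ?orbT.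
  + by case: (xP' (i := i2) _ zP); rewrite !inE eqxx ?orbT.
  + by [].
  + by case: (xP' (i := i1) _ zP); rewrite !inE eqxx ?orbT.
Qed.

Lemma sq_F i1 i2 m1 m2 E :
  [set x i1; x i2] \in P -> [set y m2; y m1] \in P' -> E = sq i1 i2 m1 m2 -> is_cycle4 E ->
  E \in F /\ E :&: P = [set [set x i1; x i2]].
Proof.
move=> HP HP' -> Hc; have [H1 H2] := square_F HP HP'.
by rewrite inE Hc H1 H2 !cards1.
Qed.

Lemma Pp_edge m : m < nstars w' -> [set y m.+1; y m] \in P'.
Proof. move=> Hm; apply/imsetP; exists (Ordinal Hm) => //=; by rewrite setUC. Qed.

Lemma F_exists e : e \in D -> exists2 E, E \in F & E :&: P = [set e].
Proof.
rewrite in_setD in_setU => /andP [/norP [nfa nfb] eP].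
have [i [j [Hi Nj Rj Ee]]] := chain_edgeP Hw eP.
have ja : j != a.
  apply/eqP => ja; move/negP: nfa; apply.
  by rewrite /flip_edges inE eP /= Ee flip_edges_char ja eqxx.
have jb : j != b.
  apply/eqP => jb; move/negP: nfb; apply.
  by rewrite /flip_edges inE eP /= Ee flip_edges_char jb eqxx.
have Hxi1 := vertS Hw Nj Rj.
have jn : j < size w by rewrite Hw.
have an : a < size w by rewrite Hw.
have bn : b < size w by rewrite Hw.
have ik : i != k.
  apply/eqP => E; move/eqP: ja; apply; apply/val_inj/(rk_inj jn an Nj Na).
  by rewrite Rj E.
have ik1 : i != k.+1.
  apply/eqP => E; move/eqP: jb; apply; apply/val_inj/(rk_inj jn bn Nj Nb).
  by rewrite Rj E rkb.
have nst := nstars'.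
case: (ltnP i k) => [ilt|kle].
  have HE : sq i i.+1 i i.+1 = cyc (x i) j b.
    by rewrite /sq (VR1 (ltnW ilt)) (VR1 ilt) Hxi1 /cyc.
  have HP : [set x i; x i.+1] \in P by rewrite Hxi1 -Ee.
  have HP' : [set y i.+1; y i] \in P'.
    exact: Pp_edge (arith2 nst ilt nst_big).
  have bj : b != j by rewrite eq_sym.
  have [HF HEP] := sq_F HP HP' (erefl _) (eq_ind_r (fun X => is_cycle4 X) (cyc_cycle4 (x i) bj) HE).
  by exists (sq i i.+1 i i.+1) => //; rewrite HEP Ee Hxi1.
have [m [Hm km]] := arith1 kle ik ik1.
clear Rj; subst i.
have aj : a != j by rewrite eq_sym.
have HE : sq m.+2 m.+3 m m.+1 = cyc (x m.+2) j a.
  by rewrite /sq (VR2 km) (VR2 (leqW km)) Hxi1 /cyc.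
have HP : [set x m.+2; x m.+3] \in P by rewrite Hxi1 -Ee.
have HP' : [set y m.+1; y m] \in P'.
  exact: Pp_edge (arith3 nst Hi).
have [HF HEP] := sq_F HP HP' (erefl _) (eq_ind_r (fun X => is_cycle4 X) (cyc_cycle4 (x m.+2) aj) HE).
by exists (sq m.+2 m.+3 m m.+1) => //; rewrite HEP Ee Hxi1.
Qed.

Lemma fa_eq : flip_edges w a = [set [set x k; flip (x k) a]].
Proof.
apply/setP => e; rewrite /flip_edges !inE; apply/andP/eqP.
  case=> eP; have [i [j [Hi Nj Rj Ee]]] := chain_edgeP Hw eP.
  rewrite Ee flip_edges_char => /eqP ja; subst j.
  by rewrite -Rj.
move=> ->; split; first exact: (chain_edge_in Hw (ltnW nst_big) Na erefl).
by rewrite flip_edges_char.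
Qed.

Lemma fb_eq : flip_edges w b = [set [set x k.+1; flip (x k.+1) b]].
Proof.
apply/setP => e; rewrite /flip_edges !inE; apply/andP/eqP.
  case=> eP; have [i [j [Hi Nj Rj Ee]]] := chain_edgeP Hw eP.
  rewrite Ee flip_edges_char => /eqP ja; subst j.
  by rewrite -Rj rkb.
move=> ->; split; first exact: (chain_edge_in Hw nst_big Nb rkb).
by rewrite flip_edges_char.
Qed.

Lemma main_result : [/\ #|F| = nstars w - 2,
  {in F &, forall E1 E2, E1 != E2 -> [disjoint E1 :&: P & E2 :&: P]},
  {in F &, forall E1 E2, E1 != E2 -> [disjoint E1 :&: P' & E2 :&: P']} &
  \bigcup_(E in F) (E :&: P) = D].
Proof.
split.
- rewrite -(card_in_imset (f := fun E => E :&: P) (D := mem F)); last first.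
    by move=> E1 E2 h1 h2 H; apply: F_inj => //; left.
  have -> : [set E :&: P | E in F] = [set [set e] | e in D].
    apply/setP => S; apply/imsetP/imsetP.
    + case=> E HE ->; have [e He] := F_single HE; exists e; [exact: F_notflip HE He | exact He].
    + case=> e eD ->; have [E HE HEP] := F_exists eD; by exists E.
  rewrite card_imset; last exact: set1_inj.
  rewrite cardsD (card_chain Hw) (setIidPr _); last first.
    by apply/subsetP => e; rewrite in_setU /flip_edges !inE => /orP [] /andP [].
  rewrite fa_eq fb_eq cards2.
  have -> : [set x k; flip (x k) a] != [set x k.+1; flip (x k.+1) b].
    by apply/eqP => /set2_flip_unique /eqP; rewrite nabo.
  by [].
- move=> E1 E2 h1 h2 ne; have [e1 He1] := F_single h1; have [e2 He2] := F_single h2.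
  rewrite He1 He2 disjoints1 inE; apply: contra ne => /eqP e12.
  by apply/eqP/F_inj => //; left; rewrite He1 He2 e12.
- move=> E1 E2 h1 h2 ne; have [e1 He1] := F_single' h1; have [e2 He2] := F_single' h2.
  rewrite He1 He2 disjoints1 inE; apply: contra ne => /eqP e12.
  by apply/eqP/F_inj => //; right; rewrite He1 He2 e12.
- apply/setP => e; apply/bigcupP/idP.
  + case=> E HE; have [e0 He0] := F_single HE; rewrite He0 inE => /eqP ->.
    exact: F_notflip HE He0.
  + move=> eD; have [E HE HEP] := F_exists eD; exists E => //; by rewrite HEP set11.
Qed.
End Main.

Theorem lemma12 (n h : nat) (w w' : seq (option bool)) (a b : 'I_n) :
  gk_chain n h w -> child_at w w' a b ->
  let F := flipping_cycles (chain_edges n w) (chain_edges n w') in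
  [/\ #|F| = h - 2,
      {in F &, forall E1 E2, E1 != E2 ->
         [disjoint E1 :&: chain_edges n w & E2 :&: chain_edges n w]},
      {in F &, forall E1 E2, E1 != E2 ->
         [disjoint E1 :&: chain_edges n w' & E2 :&: chain_edges n w']} &
      \bigcup_(E in F) (E :&: chain_edges n w) =
        chain_edges n w :\: (flip_edges w a :|: flip_edges w b)].
Proof.
move=> [Hsz [us [Hus _ Hw0]]] [/andP [Hab Hbn] Ha Hb Hbet Hw'] F.
have an : a < size w := ltn_trans Hab Hbn.
have Na : nth None w a = None by rewrite (set_nth_default (Some false)).
have Nb : nth None w b = None by rewrite (set_nth_default (Some false)).
have Hbet2 : forall j, a < j < b -> nth None w j != None.
  move=> j /andP [h1 h2]; rewrite (set_nth_default (Some false)); last exact: ltn_trans h2 Hbn.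
  by apply: Hbet; rewrite h1 h2.
have hN : nstars w = h by rewrite Hw0 nstars_gk Hus.
by rewrite -hN; exact: main_result Hsz Hab Na Nb Hbet2 Hw'.
Qed.
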